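(* Let $\Sigma=(0,\infty]$, let $a,b\in\mathbb{N}$ with $a,b>1$, and let $c\in\mathbb{R}$ with $c>0$. Fix $z\in\Sigma^{\infty}$ with $l(z)=\infty$ and $z_k\neq\infty$ for all $k\in\omega_b$ with $k\geq 2$. Let $$\Sigma_{b,c}^{\infty}:=\{y\in\Sigma^{\infty}: 2\leq l(y),\ y_1=c,\ y_k=\infty \text{ for all } k\notin\omega_b \text{ with } 2\leq k\leq l(y)\}.$$ Define $\Theta_{a,b}^{z}:\Sigma_{b,c}^{\infty}\to\Sigma_{b,c}^{\infty}$ by $\Theta_{a,b}^{z}(x)=x_{\Theta_{a,b}^{z}}$, where $$(x_{\Theta_{a,b}^{z}})_k:=\begin{cases} c & \text{if } k=1,\\ \infty & \text{if } k\notin\omega_b \text{ and } 2\leq k\leq l(x)+1,\\ a\cdot x_{k/b}+z_k & \text{if } k\in\omega_b \text{ and } k/b\leq l(x).\end{cases}$$ Then $\Theta_{a,b}^{z}$ has a unique fixed point $v\in\Sigma_{b,c}^{\infty}$, and this fixed point satisfies $l(v)=\infty$.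
   Context: $\mathbb{N}$ denotes the set of positive integers. For an alphabet (nonempty set) $\Sigma$, $\Sigma^{\infty}$ denotes the set of all nonempty finite and infinite sequences (words) over $\Sigma$; for $x\in\Sigma^\infty$, $l(x)\in[1,\infty]$ is its length and $x_k$ its $k$-th letter ($1\le k\le l(x)$). For $b\in\mathbb{N}$, $\omega_b=\{b^k:k\in\mathbb{N}\}$. Arithmetic on $(0,\infty]$ uses the usual conventions ($a\cdot\infty+t=\infty$). *)

(* Defs.v *)
From Stdlib Require Import Reals Arith ClassicalEpsilon.
Open Scope R_scope.

(* A letter of Sigma = (0, +oo]: [Some r] is the real r, [None] is +oo. *)
Definition letter := option R.

Definition in_Sigma (s : letter) : Prop :=
  match s with Some r => 0 < r | None => True end.

(* A word in Sigma^oo: a length l in [1, oo] ([None] = oo) and letters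
   x_k for 1 <= k <= l (values outside this range are irrelevant). *)
Record word := mkWord { wlen : option nat; wlet : nat -> letter }.

Definition idx_le (k : nat) (l : option nat) : Prop :=
  match l with Some n => (k <= n)%nat | None => True end.

Definition is_word (w : word) : Prop :=
  (match wlen w with Some n => (1 <= n)%nat | None => True end) /\
  forall k, (1 <= k)%nat -> idx_le k (wlen w) -> in_Sigma (wlet w k).

Definition weq (x y : word) : Prop :=
  wlen x = wlen y /\
  forall k, (1 <= k)%nat -> idx_le k (wlen x) -> wlet x k = wlet y k.

Definition in_omega (b k : nat) : Prop := exists j, (1 <= j)%nat /\ k = (b ^ j)%nat.

Definition Sigma_bc (b : nat) (c : R) (y : word) : Prop :=
  is_word y /\ idx_le 2 (wlen y) /\ wlet y 1%nat = Some c /\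
  forall k, (2 <= k)%nat -> idx_le k (wlen y) -> ~ in_omega b k -> wlet y k = None.

(* a * x + t on (0, oo], with a * oo + t = oo and a * x + oo = oo *)
Definition aff (a : nat) (x t : letter) : letter :=
  match x, t with
  | Some r, Some s => Some (INR a * r + s)
  | _, _ => None
  end.

Definition lsucc (l : option nat) : option nat :=
  match l with Some n => Some (S n) | None => None end.

Definition Theta (a b : nat) (c : R) (z x : word) : word :=
  mkWord (lsucc (wlen x))
    (fun k => if Nat.eqb k 1 then Some c
              else if excluded_middle_informative (in_omega b k)
                   then aff a (wlet x (k / b)) (wlet z k)
                   else None).

(* Main.v *)
Require Import Defs.
From Stdlib Require Import Reals Arith Lia Lra ClassicalEpsilon.
Open Scope R_scope.

Fixpoint gfix (a b : nat) (c : R) (z : word) (n k : nat) : letter :=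
  match n with
  | O => Some c
  | S n' => if Nat.eqb k 1 then Some c
            else if excluded_middle_informative (in_omega b k)
                 then aff a (gfix a b c z n' (k / b)%nat) (wlet z k)
                 else None
  end.

Lemma omega_ge (b k : nat) : (1 < b)%nat -> in_omega b k -> (b <= k)%nat.
Proof.
  intros Hb [j [Hj ->]].
  replace b with (b ^ 1)%nat at 1 by (simpl; lia).
  apply Nat.pow_le_mono_r; lia.
Qed.

Lemma div_lt' (b k : nat) : (1 < b)%nat -> (1 <= k)%nat -> (k / b < k)%nat.
Proof. intros; apply Nat.div_lt; lia. Qed.

Lemma div_pos' (b k : nat) : (1 < b)%nat -> (b <= k)%nat -> (1 <= k / b)%nat.
Proof. intros. assert (0 < k / b)%nat by (apply Nat.div_str_pos; lia). lia. Qed.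

Lemma gfix_stable a b c z : (1 < b)%nat ->
  forall n m k, (k < n)%nat -> (k < m)%nat -> gfix a b c z n k = gfix a b c z m k.
Proof.
  intros Hb n. induction n as [|n IH]; intros m k Hn Hm; [lia|].
  destruct m as [|m]; [lia|]. simpl.
  destruct (Nat.eqb k 1); auto.
  destruct (excluded_middle_informative (in_omega b k)) as [Ho|]; auto.
  pose proof (omega_ge _ _ Hb Ho).
  pose proof (div_lt' b k Hb ltac:(lia)).
  rewrite (IH m); auto; lia.
Qed.

Lemma gfix_pos a b c z : (1 < b)%nat -> 0 < c -> is_word z -> wlen z = None ->
  forall n k, in_Sigma (gfix a b c z n k).
Proof.
  intros Hb Hc [_ Hz] Hzl n. induction n as [|n IH]; intros k; simpl; auto.
  destruct (Nat.eqb k 1); simpl; auto.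
  destruct (excluded_middle_informative (in_omega b k)) as [Ho|]; simpl; auto.
  unfold aff. specialize (IH (k / b)%nat).
  destruct (gfix a b c z n (k / b)%nat) as [r|]; simpl; auto.
  pose proof (omega_ge _ _ Hb Ho).
  assert (Hs := Hz k ltac:(clear -H Hb; lia)). rewrite Hzl in Hs. specialize (Hs I).
  destruct (wlet z k) as [s|]; simpl in *; auto.
  pose proof (pos_INR a). nra.
Qed.

Theorem theorem4 (a b : nat) (c : R) (z : word) :
  (1 < a)%nat -> (1 < b)%nat -> 0 < c ->
  is_word z -> wlen z = None ->
  (forall k, (2 <= k)%nat -> in_omega b k -> wlet z k <> None) ->
  exists v : word,
    Sigma_bc b c v /\ weq (Theta a b c z v) v /\
    (forall w : word, Sigma_bc b c w -> weq (Theta a b c z w) w -> weq w v) /\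
    wlen v = None.
Proof.
  intros Ha Hb Hc Hzw Hzl _.
  set (v := mkWord None (fun k => gfix a b c z (S k) k)).
  exists v. split; [|split; [|split]]; auto.
  - split; [split; [exact I|]|split; [exact I|split]].
    + intros k _ _. apply (gfix_pos a b c z); auto.
    + reflexivity.
    + intros k Hk _ Hno. simpl.
      destruct (Nat.eqb_spec k 1); [lia|].
      destruct (excluded_middle_informative (in_omega b k)); tauto.
  - split; [reflexivity|]. intros k Hk _. simpl.
    destruct (Nat.eqb_spec k 1); auto.
    destruct (excluded_middle_informative (in_omega b k)) as [Ho|]; auto.
    pose proof (omega_ge _ _ Hb Ho).
    pose proof (div_lt' b k Hb ltac:(lia)).
    f_equal. exact (gfix_stable a b c z Hb (S (k / b)%nat) k (k / b)%nat ltac:(lia) ltac:(lia)).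
  - intros w _ [Hl Hw].
    assert (Hwl : wlen w = None).
    { simpl in Hl. destruct (wlen w) as [n|]; [simpl in Hl; injection Hl; lia|reflexivity]. }
    split; [exact Hwl|]. simpl in Hw. rewrite Hwl in Hw.
    intros k. induction k as [k IH] using lt_wf_ind. intros Hk _.
    rewrite <- (Hw k Hk I). simpl.
    destruct (Nat.eqb_spec k 1); auto.
    destruct (excluded_middle_informative (in_omega b k)) as [Ho|]; auto.
    pose proof (omega_ge _ _ Hb Ho).
    pose proof (div_lt' b k Hb ltac:(lia)).
    pose proof (div_pos' b k Hb ltac:(lia)).
    rewrite (IH (k / b)%nat) by (auto; rewrite Hwl; exact I). simpl.
    f_equal. exact (gfix_stable a b c z Hb (S (k / b)%nat) k (k / b)%nat ltac:(lia) ltac:(lia)).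
Qed.
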